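(* For every $d\ge 1$, every hierarchical hub labeling of the $d$-dimensional hypercube $Q_d$ has size at least $3^d$. Consequently, the minimum size of a hierarchical hub labeling of $Q_d$ is exactly $3^d$. *)

(* Defs.v *)
From HB Require Import structures.
From mathcomp Require Import all_boot.
Set Implicit Arguments. Unset Strict Implicit. Unset Printing Implicit Defensive.

(* A walk of length k from u to v: a sequence p of k further vertices,
   consecutive ones adjacent, ending at v. *)
Definition walk {T : finType} (e : rel T) (u v : T) (k : nat) : Prop :=
  exists p : seq T, [/\ path e u p, last u p = v & size p = k].

Definition is_dist {T : finType} (e : rel T) (u v : T) (k : nat) : Prop :=
  walk e u v k /\ forall m, walk e u v m -> k <= m.

Definition on_shortest_path {T : finType} (e : rel T) (u w v : T) : Prop :=
  exists k1 k2, [/\ is_dist e u w k1, is_dist e w v k2 & is_dist e u v (k1 + k2)].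

(* Hub labeling: every pair u, v (in the same component) has a common hub
   lying on a shortest u-v path. (Q_d is connected.) *)
Definition hub_labeling {T : finType} (e : rel T) (H : T -> {set T}) : Prop :=
  forall u v : T, (exists k, is_dist e u v k) ->
    exists2 w, w \in H u :&: H v & on_shortest_path e u w v.

(* Hierarchical: there is a total order on vertices (an injective rank)
   such that every hub of v is ranked at least as high as v. *)
Definition hierarchical {T : finType} (H : T -> {set T}) : Prop :=
  exists rank : T -> nat, injective rank /\
    forall v w : T, w \in H v -> rank v <= rank w.

Definition hierarchical_hub_labeling {T : finType} (e : rel T)
  (H : T -> {set T}) : Prop := hub_labeling e H /\ hierarchical H.

Definition labeling_size {T : finType} (H : T -> {set T}) : nat :=
  \sum_(v : T) #|H v|.

Definition hypercube_vertex (d : nat) := {ffun 'I_d -> bool}.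
Definition hypercube_adj (d : nat) : rel (hypercube_vertex d) :=
  fun x y => #|[set i : 'I_d | x i != y i]| == 1.

(* Main.v *)
Require Import Defs.
From HB Require Import structures.
From mathcomp Require Import all_boot.
From mathcomp Require Import zify.
Set Implicit Arguments. Unset Strict Implicit. Unset Printing Implicit Defensive.

Lemma size_sum (T : finType) (H : T -> {set T}) :
 labeling_size H = \sum_(u : T) \sum_(w : T) (nat_of_bool (w \in H u)).
Proof.
rewrite /labeling_size.
apply: eq_bigr => u _.
rewrite -sum1_card big_mkcond /=.
by apply: eq_bigr => w _; case: (w \in H u).
Qed.

Lemma size_pairs (T : finType) (H : T -> {set T}) :
  labeling_size H = #|[set p : T * T | p.2 \in H p.1]|.
Proof.
rewrite size_sum pair_big /= -sum1_card [RHS]big_mkcond /=; apply: eq_bigr => p _.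
by rewrite inE; case: (_ \in _).
Qed.

Section Cube.
Variable d : nat.
Local Notation T := (hypercube_vertex d).
Local Notation adj := (@hypercube_adj d).

Definition diffs (x y : T) : {set 'I_d} := [set i | x i != y i].
Definition ham (x y : T) := #|diffs x y|.

Lemma ham_tri u x v : ham u v <= ham u x + ham x v.
Proof.
rewrite /ham -cardsUI; apply: leq_trans (leq_addr _ _).
apply: subset_leq_card; apply/subsetP=> i; rewrite !inE.
by case: (u i); case: (x i); case: (v i).
Qed.

Lemma walk_ge u v k : walk adj u v k -> ham u v <= k.
Proof.
move=> [p [hp hl hs]]; subst k.
elim: p u hp hl => [|x p IH] u /=.
  move=> _ <-; rewrite /ham (_ : diffs u u = set0) ?cards0 //.
  by apply/setP=> i; rewrite !inE eqxx.
move=> /andP[hux hp] hl; have := IH x hp hl.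
have h1 : ham u x = 1 by apply/eqP.
have := ham_tri u x v; move=> a b; apply: leq_trans a _; rewrite h1 add1n ltnS; exact: b.
Qed.

Lemma walk_ham n u v : ham u v = n -> walk adj u v n.
Proof.
elim: n u => [|n IH] u h.
  have : diffs u v = set0 by apply/cards0_eq.
  move=> h0; have -> : u = v.
    apply/ffunP=> i; apply/eqP; apply: contraT=> hi.
    have : i \in diffs u v by rewrite inE.
    by rewrite h0 inE.
  by exists [::].
have : 0 < ham u v by rewrite h.
rewrite card_gt0 => /set0Pn[i hi].
pose x : T := [ffun j => if j == i then ~~ u i else u j].
have hx : diffs x v = diffs u v :\ i.
  apply/setP=> j; rewrite !inE !ffunE; move: hi; rewrite inE.
  by case: (j =P i) => [->|_]; case: (u i); case: (v i).
have hn : ham x v = n.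
  move: h; rewrite /ham hx (cardsD1 i (diffs u v)) hi; lia.
have [p [hp hl hs]] := IH x hn.
exists (x :: p); split => /=; rewrite ?hs // hp andbT.
rewrite /hypercube_adj (_ : [set j | u j != x j] = [set i]) ?cards1 //.
apply/setP=> j; rewrite !inE !ffunE.
by case: (j =P i) => [->|_]; rewrite ?eqxx; case: (u i).
Qed.

Lemma distE u v k : is_dist adj u v k <-> k = ham u v.
Proof.
split.
  move=> [hw hmin]; have := hmin _ (walk_ham erefl); have := walk_ge hw; lia.
move=> ->; split; first exact: walk_ham.
by move=> m hm; apply: walk_ge.
Qed.

Lemma on_sp_fixed (u w v : T) : on_shortest_path adj u w v ->
  forall i, u i = v i -> w i = u i.
Proof.
move=> [k1 [k2 [h1 h2 h3]]]; move/distE: h1; move/distE: h2; move/distE: h3.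
move=> h3 h2 h1 i huv; apply/eqP; apply: contraT => hw.
have hi : i \in diffs u w :&: diffs w v.
  by rewrite !inE -huv eq_sym hw.
have : 0 < #|diffs u w :&: diffs w v| by rewrite card_gt0; apply/set0Pn; exists i.
have := cardsUI (diffs u w) (diffs w v).
have : ham u v <= #|diffs u w :|: diffs w v|.
  apply: subset_leq_card; apply/subsetP=> j; rewrite !inE.
  by case: (u j); case: (w j); case: (v j).
rewrite /ham in h1 h2 h3 *; lia.
Qed.

Lemma on_sp_between (u w v : T) : (forall i, (w i == u i) || (w i == v i)) ->
  on_shortest_path adj u w v.
Proof.
move=> h; exists (ham u w), (ham w v); split; apply/distE => //.
have e1 : diffs u w :|: diffs w v = diffs u v.
  apply/setP=> j; move: (h j); rewrite !inE.
  by case: (u j); case: (w j); case: (v j).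
have e2 : diffs u w :&: diffs w v = set0.
  apply/setP=> j; move: (h j); rewrite !inE.
  by case: (u j); case: (w j); case: (v j).
have := cardsUI (diffs u w) (diffs w v); rewrite e1 e2 cards0 /ham; lia.
Qed.


Lemma lower (H : T -> {set T}) :
  hierarchical_hub_labeling adj H -> 3 ^ d <= labeling_size H.
Proof.
move=> [hub [rank [rinj rmono]]].
pose inC (c : {ffun 'I_d -> 'I_3}) (x : T) :=
  [forall i, (2 <= c i) || (x i == (c i == 1 :> nat))].
pose x0 (c : {ffun 'I_d -> 'I_3}) : T := [ffun i => c i == 1 :> nat].
have hx0 c : inC c (x0 c) by apply/forallP=> i; rewrite ffunE eqxx orbT.
pose m (c : {ffun 'I_d -> 'I_3}) := [arg max_(x > x0 c | inC c x) rank x].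
pose a (c : {ffun 'I_d -> 'I_3}) : T := [ffun i => if 2 <= c i then ~~ m c i else m c i].
pose f (c : {ffun 'I_d -> 'I_3}) := (a c, m c).
have mP (c : {ffun 'I_d -> 'I_3}) : inC c (m c) /\ forall x, inC c x -> rank x <= rank (m c).
  rewrite /m; case: (arg_maxnP (fun x => rank x) (hx0 c)) => y hy hmax.
  by split => // x hx; apply: hmax.
have key (c : {ffun 'I_d -> 'I_3}) i : val (c i) = (if a c i != m c i then 2 else nat_of_bool (m c i)).
  rewrite ffunE; have [hm _] := mP c; move/forallP: hm => /(_ i).
  case: (c i) => /= n hn.
  by case: n hn => [|[|[|n]]] //= _; case: (m c i).
have finj : injective f.
  move=> c c' [ea em]; apply/ffunP => i; apply/val_inj.
  by rewrite (key c i) ea em -(key c' i).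
have fP (c : {ffun 'I_d -> 'I_3}) : f c \in [set p : T * T | p.2 \in H p.1].
  rewrite inE /=.
  have [x hx hsp] := hub (a c) (m c)
    (ex_intro _ _ (proj2 (distE (a c) (m c) (ham (a c) (m c))) erefl)).
  move: hx; rewrite inE => /andP[hxa hxm].
  have hxC : inC c x.
    apply/forallP=> i; have [hm _] := mP c; move/forallP: hm => /(_ i).
    case: (leqP 2 (c i)) => //= hci hmi.
    have e : a c i = m c i by rewrite ffunE leqNgt hci.
    by rewrite (on_sp_fixed hsp e) e.
  have h2 := (proj2 (mP c)) x hxC; have h1 := rmono _ _ hxm.
  have : rank x = rank (m c) by apply/eqP; rewrite eqn_leq h1 h2.
  by move/rinj => <-.
rewrite size_pairs.
have := card_ffun 'I_d 'I_3; rewrite !card_ord => <-.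
rewrite -cardsT -(card_imset _ finj).
apply: subset_leq_card; apply/subsetP => p /imsetP[c _ ->]; exact: fP.
Qed.

Lemma upper : exists H : T -> {set T},
  hierarchical_hub_labeling adj H /\ labeling_size H = 3 ^ d.
Proof.
pose H (u : T) : {set T} := [set w : T | [forall i, u i ==> w i]].
exists H; split; [split|].
- move=> u v _; exists ([ffun i => u i || v i] : T).
    rewrite !inE; apply/andP; split; apply/forallP=> i; rewrite ffunE;
      by case: (u i); case: (v i).
  by apply: on_sp_between => i; rewrite ffunE; case: (u i); case: (v i).
- exists (fun x : T => #|[set i | x i]| * #|T| + enum_rank x); split.
    move=> x y /(congr1 (modn ^~ #|T|)).
    rewrite !modnMDl !modn_small ?ltn_ord // => /val_inj/enum_rank_inj.
    done.
  move=> v w; rewrite inE => /forallP hvw.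
  have hsub : [set i | v i] \subset [set i | w i].
    by apply/subsetP => i; rewrite !inE; exact: (implyP (hvw i)).
  case: (eqVneq v w) => [-> //|hne].
  have hpr : [set i | v i] \proper [set i | w i].
    rewrite properEneq hsub andbT; apply: contra hne => /eqP e.
    by apply/eqP; apply/ffunP=> i; move/setP: e => /(_ i); rewrite !inE.
  have := proper_card hpr; have := ltn_ord (enum_rank v).
  move=> h1 h2; apply: leq_trans (leq_addr (enum_rank w) _).
  apply: leq_trans (leq_mul h2 (leqnn #|T|)).
  by rewrite mulSn [X in _ <= X]addnC leq_add2l ltnW.
- rewrite size_pairs.
  pose g (c : {ffun 'I_d -> 'I_3}) : T * T :=
    ([ffun i => 2 <= c i], [ffun i => 1 <= c i]).
  have ginj : injective g.
    move=> c c' [e1 e2]; apply/ffunP=> i; apply/val_inj.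
    move/ffunP: e1 => /(_ i); move/ffunP: e2 => /(_ i); rewrite !ffunE.
    case: (c i) => [n hn]; case: (c' i) => [n' hn'] /=.
    by case: n hn => [|[|[|n]]] //; case: n' hn' => [|[|[|n']]].
  have -> : [set p : T * T | p.2 \in H p.1] = g @: setT.
    apply/setP => [[u w]]; rewrite !inE /=; apply/idP/imsetP.
      move=> /forallP h; exists [ffun i => inord (u i + w i)] => //.
      congr (_, _); apply/ffunP => i; rewrite !ffunE inordK;
        try (by case: (u i); case: (w i));
        by move: (h i); case: (u i); case: (w i).
    case=> c _ [-> ->]; apply/forallP=> i; rewrite !ffunE; apply/implyP.
    by move=> h; apply: leq_trans h.
  by rewrite card_imset // cardsT card_ffun !card_ord.
Qed.

End Cube.

Theorem mainTheorem3 (d : nat) (hd : 1 <= d) :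
  (forall H : hypercube_vertex d -> {set hypercube_vertex d},
      hierarchical_hub_labeling (@hypercube_adj d) H -> 3 ^ d <= labeling_size H)
  /\ (exists H : hypercube_vertex d -> {set hypercube_vertex d},
      hierarchical_hub_labeling (@hypercube_adj d) H /\ labeling_size H = 3 ^ d).
Proof.
split; [exact: lower | exact: upper].
Qed.
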